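(* Let $k\in\mathbb{N}$, let $G$ be a digraph and $\mathcal{P}_k=\{V_{ij}:i,j\in[k]\}$ a $k^2$-partition of $V(G)$. Let $\mathcal{Q}$ be a path system all of whose edges lie in $\mathcal{B}_k(\mathcal{P}_k,G)$ such that for all $i\in[k]$, $$\sum_{j\neq i}a_{ij}-\sum_{j\neq i}a_{ji}=|V_{i*}|-|V_{*i}|,$$ where $a_{ij}=|E(\mathcal{Q})\cap E(V_{i*},V_{*j})|$ for $i\neq j$. Then contracting $\mathcal{Q}$ in $G$ with respect to $\mathcal{P}_k$ yields a digraph $G'$ with a $k^2$-partition $\mathcal{P}'_k=\{V'_{ij}:i,j\in[k]\}$ such that $|V'_{i*}|=|V'_{*i}|$ for all $i\in[k]$.
   Context: A path system is a set of vertex-disjoint directed paths. A $k^2$-partition of $V(G)$ is a family $\{V_{ij}:i,j\in[k]\}$ of pairwise disjoint (possibly empty) sets with union $V(G)$; $V_{i*}=\bigcup_jV_{ij}$, $V_{*j}=\bigcup_iV_{ij}$; $E(A,B)$ is the set of edges $ab$ with $a\in A,b\in B$; bad edges $\mathcal{B}_k(\mathcal{P}_k,G)=\bigcup_{i\neq j}E(V_{i*},V_{*j})$. Contraction: for each path $Q\in\mathcal{Q}$ from $u$ to $v$ create a new vertex $x_Q$; $V(G')=(V(G)\setminus V(\mathcal{Q}))\cup\{x_Q\}$. For $y\in V(G')$ put $y^-=y^+=y$ if $y\in V(G)$ and $x_Q^-=u$, $x_Q^+=v$; $yz\in E(G')$ iff $y^+z^-\in E(G)$. The resulting partition $\mathcal{P}'_k$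 has $V'_{ij}$ equal to $V_{ij}\setminus V(\mathcal{Q})$ together with all $x_Q$ for which $Q$ goes from $u\in V_{*j}$ to $v\in V_{i*}$; $V'_{i*},V'_{*j}$ are defined analogously. *)

(* Defs.v *)
From mathcomp Require Import all_boot all_order all_algebra.
Set Implicit Arguments. Unset Strict Implicit. Unset Printing Implicit Defensive.

(* Digraph G: vertex set a finType V, edge relation e : rel V.
   A k^2-partition of V(G): a map part : V -> 'I_k * 'I_k, V_ij = part^-1 (i,j). *)
Section Contraction.
Variables (V : finType) (k : nat) (e : rel V) (part : V -> 'I_k * 'I_k).

Definition Vij (i j : 'I_k) : {set V} := [set v | part v == (i, j)].
Definition Vrow (i : 'I_k) : {set V} := \bigcup_(j < k) Vij i j.
Definition Vcol (j : 'I_k) : {set V} := \bigcup_(i < k) Vij i j.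

Definition is_dipath (p : seq V) : bool :=
  if p is x :: s then path e x s && uniq p else false.

Definition path_system (Qs : seq (seq V)) : bool :=
  all is_dipath Qs && uniq (flatten Qs).

Definition path_edges (p : seq V) : seq (V * V) := zip p (behead p).

Definition ps_edges (Qs : seq (seq V)) : {set V * V} :=
  [set x | has (fun p => x \in path_edges p) Qs].

Definition Eset (A B : {set V}) : {set V * V} :=
  [set x | [&& e x.1 x.2, x.1 \in A & x.2 \in B]].

Definition bad_edges : {set V * V} :=
  \bigcup_(i < k) \bigcup_(j < k | i != j) Eset (Vrow i) (Vcol j).

Definition acount (Qs : seq (seq V)) (i j : 'I_k) : nat :=
  #|ps_edges Qs :&: Eset (Vrow i) (Vcol j)|.

Definition ps_verts (Qs : seq (seq V)) : {set V} := [set v | v \in flatten Qs].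

(* vertices of the contracted digraph G': the vertices outside V(Q), plus one
   new vertex x_Q for each path Q (indexed by its position in Qs) *)
Definition cvert (Qs : seq (seq V)) : finType :=
  ({v : V | v \notin ps_verts Qs} + 'I_(size Qs))%type.

(* y^- and y^+ (None only for the impossible empty path) *)
Definition cminus Qs (y : cvert Qs) : option V :=
  match y with
  | inl v => Some (val v)
  | inr q => if nth [::] Qs q is x :: _ then Some x else None
  end.
Definition cplus Qs (y : cvert Qs) : option V :=
  match y with
  | inl v => Some (val v)
  | inr q => if nth [::] Qs q is x :: s then Some (last x s) else None
  end.

Definition cedge Qs : rel (cvert Qs) := fun y z =>
  match cplus y, cminus z with Some a, Some b => e a b | _, _ => false end.

Definition goes_to (p : seq V) (i j : 'I_k) : bool :=
  if p is x :: s then ((part x).2 == j) && ((part (last x s)).1 == i) else false.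

Definition cVij Qs (i j : 'I_k) : {set cvert Qs} :=
  [set y : cvert Qs | match y with
                      | inl v => val v \in Vij i j
                      | inr q => goes_to (nth [::] Qs q) i j
                      end].
Definition cVrow Qs (i : 'I_k) : {set cvert Qs} := \bigcup_(j < k) cVij Qs i j.
Definition cVcol Qs (j : 'I_k) : {set cvert Qs} := \bigcup_(i < k) cVij Qs i j.

End Contraction.

(* Main.v *)
Require Import Defs.
From mathcomp Require Import all_boot all_order all_algebra.
From mathcomp Require Import zify.
Set Implicit Arguments. Unset Strict Implicit.

Section Aux.
Variables (V : finType) (k : nat) (e : rel V) (part : V -> 'I_k * 'I_k).

Lemma card_seq_count (T : finType) (s : seq T) (P : pred T) :
  uniq s -> #|[set x | x \in s & P x]| = count P s.
Proof.
move=> u; rewrite -size_filter.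
move/card_uniqP: (filter_uniq P u) => <-.
by apply: eq_card => x; rewrite inE mem_filter andbC.
Qed.

Lemma count_zip1 (P : pred V) x s :
  count (fun z : V * V => P z.1) (zip (x :: s) s) + P (last x s) = count P (x :: s).
Proof.
elim: s x => [|y s IH] x /=; first by rewrite addn0.
have := IH y. simpl. lia.
Qed.

Lemma count_zip2 (P : pred V) x s :
  count (fun z : V * V => P z.2) (zip (x :: s) s) + P x = count P (x :: s).
Proof.
elim: s x => [|y s IH] x /=; first by rewrite addn0.
have := IH y. simpl. lia.
Qed.

Definition grow (i : 'I_k) (p : seq V) := if p is x :: s then (part (last x s)).1 == i else false.
Definition gcol (i : 'I_k) (p : seq V) := if p is x :: _ then (part x).2 == i else false.

Lemma rows_sum (P : pred V) (Qs : seq (seq V)) :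
  all (fun p => p != [::]) Qs ->
  count (fun z : V * V => P z.1) (flatten (map (@path_edges V) Qs)) +
  count (fun p => if p is x :: s then P (last x s) else false) Qs
  = count P (flatten Qs).
Proof.
elim: Qs => [|p Qs IH] //=; case: p => [|x s] //= H; have := IH H.
have := count_zip1 P x s; rewrite /path_edges /= !count_cat /=; lia.
Qed.

Lemma cols_sum (P : pred V) (Qs : seq (seq V)) :
  all (fun p => p != [::]) Qs ->
  count (fun z : V * V => P z.2) (flatten (map (@path_edges V) Qs)) +
  count (fun p => if p is x :: s then P x else false) Qs
  = count P (flatten Qs).
Proof.
elim: Qs => [|p Qs IH] //=; case: p => [|x s] //= H; have := IH H.
have := count_zip2 P x s; rewrite /path_edges /= !count_cat /=; lia.
Qed.

Lemma edges_uniq (Qs : seq (seq V)) :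
  uniq (flatten Qs) -> uniq (flatten (map (@path_edges V) Qs)).
Proof.
move=> u; apply: (@map_uniq _ _ snd).
rewrite map_flatten -map_comp.
have -> : [seq (map snd \o @path_edges V) i | i <- Qs] = map behead Qs.
  apply: eq_map => p /=; rewrite /path_edges; apply: unzip2_zip; by rewrite size_behead leq_pred.
apply: subseq_uniq u.
elim: Qs => [|p Qs IH] //=; apply: cat_subseq => //.
by case: p => //= x s; apply: subseq_cons.
Qed.

Lemma count_sum (T : Type) (P : pred T) s : count P s = \sum_(x <- s) (P x : nat).
Proof. by elim: s => [|x s IH] /=; rewrite ?big_nil ?big_cons ?IH. Qed.

Lemma sum_ind (c i : 'I_k) : c != i -> \sum_(j < k | j != i) (c == j : nat) = 1%N.
Proof.
move=> ci; rewrite (bigD1 c) //= eqxx big1 // => j /andP [_ jc].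
by rewrite eq_sym (negbTE jc).
Qed.

Lemma sum_ind0 (i : 'I_k) : \sum_(j < k | j != i) (false : nat) = 0%N.
Proof. by rewrite big1. Qed.

Lemma in_Vrow i v : (v \in Vrow part i) = ((part v).1 == i).
Proof.
apply/bigcupP/idP => [[j _]|/eqP <-]; first by rewrite inE => /eqP ->.
by exists (part v).2 => //; rewrite inE -surjective_pairing.
Qed.

Lemma in_Vcol i v : (v \in Vcol part i) = ((part v).2 == i).
Proof.
apply/bigcupP/idP => [[j _]|/eqP <-]; first by rewrite inE => /eqP ->.
by exists (part v).1 => //; rewrite inE -surjective_pairing.
Qed.

Lemma bad_mem x : x \in bad_edges e part -> e x.1 x.2 && ((part x.1).1 != (part x.2).2).
Proof.
move=> /bigcupP [a _ /bigcupP [b ab]]; rewrite inE in_Vrow in_Vcol.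
by case/and3P => -> /eqP -> /eqP ->.
Qed.

End Aux.

Section Aux2.
Variables (V : finType) (k : nat) (e : rel V) (part : V -> 'I_k * 'I_k).

Lemma in_cVrow_l Qs i (v : {v | v \notin ps_verts Qs}) :
  ((inl v : cvert Qs) \in cVrow part Qs i) = ((part (val v)).1 == i).
Proof.
apply/bigcupP/idP => [[j _]|/eqP <-]; first by rewrite !inE => /eqP ->.
by exists (part (val v)).2 => //; rewrite !inE -surjective_pairing.
Qed.

Lemma in_cVcol_l Qs i (v : {v | v \notin ps_verts Qs}) :
  ((inl v : cvert Qs) \in cVcol part Qs i) = ((part (val v)).2 == i).
Proof.
apply/bigcupP/idP => [[j _]|/eqP <-]; first by rewrite !inE => /eqP ->.
by exists (part (val v)).1 => //; rewrite !inE -surjective_pairing.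
Qed.

Lemma in_cVrow_r Qs i (q : 'I_(size Qs)) :
  ((inr q : cvert Qs) \in cVrow part Qs i) = grow part i (nth [::] Qs q).
Proof.
apply/bigcupP/idP => [[j _]|].
  by rewrite inE /goes_to /grow; case: nth => [|x s] //= /andP [].
rewrite /grow; case E: nth => [|x s] // h.
by exists (part x).2 => //; rewrite inE /= E /goes_to eqxx h.
Qed.

Lemma in_cVcol_r Qs i (q : 'I_(size Qs)) :
  ((inr q : cvert Qs) \in cVcol part Qs i) = gcol part i (nth [::] Qs q).
Proof.
apply/bigcupP/idP => [[j _]|].
  by rewrite inE /goes_to /gcol; case: nth => [|x s] //= /andP [].
rewrite /gcol; case E: nth => [|x s] // h.
by exists (part (last x s)).1 => //; rewrite inE /= E /goes_to eqxx h.
Qed.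

Lemma card_sig_set Qs (P : pred V) :
  \sum_(v : {v | v \notin ps_verts Qs}) (P (val v) : nat) =
  #|[set v | P v & v \notin ps_verts Qs]|.
Proof.
transitivity #|[set v : {v | v \notin ps_verts Qs} | P (val v)]|.
  by rewrite -sum1_card [RHS]big_mkcond; apply: eq_bigr => v _; rewrite inE; case: (P _).
rewrite -(card_imset _ val_inj); apply: eq_card => v.
apply/imsetP/idP => [[w]|]; first by move=> pw ->; rewrite !inE in pw *; rewrite pw /=; have := valP w; rewrite inE.
by rewrite inE => /andP [pv nv]; exists (exist _ v nv) => //; rewrite inE.
Qed.

Lemma card_cVrow Qs i : #|cVrow part Qs i| =
  #|[set v | ((part v).1 == i) & v \notin ps_verts Qs]| + count (grow part i) Qs.
Proof.
transitivity (\sum_(y : cvert Qs) ((y \in cVrow part Qs i) : nat)).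
  by rewrite -sum1_card [LHS]big_mkcond; apply: eq_bigr => y _; case: (_ \in _).
rewrite big_sumType; congr (_ + _).
  rewrite -card_sig_set; apply: eq_bigr => v _; by rewrite in_cVrow_l.
rewrite count_sum (big_nth [::]) big_mkord; apply: eq_bigr => q _; by rewrite in_cVrow_r.
Qed.

Lemma card_cVcol Qs i : #|cVcol part Qs i| =
  #|[set v | ((part v).2 == i) & v \notin ps_verts Qs]| + count (gcol part i) Qs.
Proof.
transitivity (\sum_(y : cvert Qs) ((y \in cVcol part Qs i) : nat)).
  by rewrite -sum1_card [LHS]big_mkcond; apply: eq_bigr => y _; case: (_ \in _).
rewrite big_sumType; congr (_ + _).
  rewrite -card_sig_set; apply: eq_bigr => v _; by rewrite in_cVcol_l.
rewrite count_sum (big_nth [::]) big_mkord; apply: eq_bigr => q _; by rewrite in_cVcol_r.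
Qed.

End Aux2.

Local Open Scope ring_scope.

Theorem lemma4p10 (k : nat) (V : finType) (e : rel V)
    (part : V -> 'I_k * 'I_k) (Qs : seq (seq V)) :
  path_system e Qs ->
  ps_edges Qs \subset bad_edges e part ->
  (forall i : 'I_k,
     ((\sum_(j < k | j != i) acount e part Qs i j)%N%:Z
      - (\sum_(j < k | j != i) acount e part Qs j i)%N%:Z)
     = (#|Vrow part i|%:Z - #|Vcol part i|%:Z)) ->
  forall i : 'I_k, #|cVrow part Qs i| = #|cVcol part Qs i|.
Proof.
move=> /andP [Hall Huniq] Hsub Hbal i.
have ne : all (fun p => p != [::]) Qs.
  by apply/allP => p /(allP Hall); case: p.
set Es := flatten (map (@path_edges V) Qs).
have uE : uniq Es := edges_uniq Huniq.
have memE x : (x \in ps_edges Qs) = (x \in Es).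
  rewrite inE; apply/hasP/flatten_mapP => [[p ? ?]|[p ? ?]]; by exists p.
have badE x : x \in Es -> e x.1 x.2 && ((part x.1).1 != (part x.2).2).
  by move=> xE; apply: bad_mem; apply: (subsetP Hsub); rewrite memE.
have hac a b : acount e part Qs a b =
    count (fun x : V * V => ((part x.1).1 == a) && ((part x.2).2 == b)) Es.
  rewrite /acount -card_seq_count //; apply: eq_card => x.
  rewrite in_setI memE !inE in_Vrow in_Vcol.
  case xE: (x \in Es) => //=; by case/andP: (badE x xE) => ->.
have hA : (\sum_(j < k | j != i) acount e part Qs i j)%N =
    count (fun x : V * V => (part x.1).1 == i) Es.
  under eq_bigr do rewrite hac count_sum.
  rewrite exchange_big /= count_sum; apply: eq_big_seq => x xE.
  case/andP: (badE x xE) => _ ne'.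
  case: (boolP ((part x.1).1 == i)) => hh /=.
    by rewrite sum_ind // -(eqP hh) eq_sym.
  by apply: big1.
have hB : (\sum_(j < k | j != i) acount e part Qs j i)%N =
    count (fun x : V * V => (part x.2).2 == i) Es.
  under eq_bigr do rewrite hac count_sum.
  rewrite exchange_big /= count_sum; apply: eq_big_seq => x xE.
  case/andP: (badE x xE) => _ ne'.
  case: (boolP ((part x.2).2 == i)) => hh /=.
    under eq_bigr do rewrite andbT.
    by rewrite sum_ind // -(eqP hh).
  by apply: big1 => j _; rewrite andbF.
have hR : #|Vrow part i| = (#|[set v | ((part v).1 == i) & v \notin ps_verts Qs]|
            + count (fun v => (part v).1 == i) (flatten Qs))%N.
  rewrite -(cardsID (ps_verts Qs) (Vrow part i)) addnC; congr (_ + _).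
    by apply: eq_card => v; rewrite !inE in_Vrow andbC.
  rewrite -card_seq_count //; apply: eq_card => v; by rewrite !inE in_Vrow andbC.
have hC : #|Vcol part i| = (#|[set v | ((part v).2 == i) & v \notin ps_verts Qs]|
            + count (fun v => (part v).2 == i) (flatten Qs))%N.
  rewrite -(cardsID (ps_verts Qs) (Vcol part i)) addnC; congr (_ + _).
    by apply: eq_card => v; rewrite !inE in_Vcol andbC.
  rewrite -card_seq_count //; apply: eq_card => v; by rewrite !inE in_Vcol andbC.
have h1 : (count (fun z : V * V => (part z.1).1 == i) Es + count (grow part i) Qs
           = count (fun v => (part v).1 == i) (flatten Qs))%N :=
  rows_sum (fun v => (part v).1 == i) ne.
have h2 : (count (fun z : V * V => (part z.2).2 == i) Es + count (gcol part i) Qs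
           = count (fun v => (part v).2 == i) (flatten Qs))%N :=
  cols_sum (fun v => (part v).2 == i) ne.
have := Hbal i; rewrite hA hB hR hC card_cVrow card_cVcol.
move: h1 h2; lia.
Qed.
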